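(* Let $(x,y,z)$ be positive integers with $x<y$ satisfying $$(x-1)x(x+1)(y-1)y(y+1)=(z-1)z(z+1),$$ and put $k=y-x$. Then either $(x,y,z)=(F_{2n-1},F_{2n+1},F_{2n}^2)$ for some integer $n\ge1$, or $$1\le x\le -\tfrac12k+\tfrac12\sqrt{3k^2+2k\sqrt{k^2+4}+4}.$$
   Context: $F_m$ denotes the $m$-th Fibonacci number: $F_0=0$, $F_1=1$, $F_{m+1}=F_m+F_{m-1}$. *)

(* Defs.v *)
From Stdlib Require Import Reals ZArith.

Fixpoint fib (m : nat) : nat :=
  match m with
  | O => 0
  | S m' => match m' with
            | O => 1
            | S m'' => fib m' + fib m''
            end
  end.

(* Main.v *)
Require Import Defs.
From Stdlib Require Import Reals ZArith Lia Lra Psatz.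

Lemma core (X Y Zz : Z) : (2 <= X -> X < Y -> 1 <= Zz ->
  (X - 1) * X * (X + 1) * ((Y - 1) * Y * (Y + 1)) = (Zz - 1) * Zz * (Zz + 1) ->
  (X*Y - Zz = 1 /\ X*X+Y*Y+1 = 3*X*Y) \/ X*X + X*(Y-X) <= (Y-X)*(Y-X) + 1)%Z.
Proof.
  intros HX HXY HZ E.
  remember (X*Y - Zz)%Z as D.
  assert (Zz = X*Y - D)%Z by lia. subst Zz.
  assert (E' : (D*(3*(X*Y)*(X*Y) - 3*(X*Y)*D + D*D - 1) = (X*Y)*(X*X+Y*Y-2))%Z) by lia.
  clear E.
  remember (X*Y)%Z as P.
  assert (HP : (P >= 6)%Z) by (subst P; nia).
  assert (HR : (P*(X*X+Y*Y-2) > 0)%Z).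
  { assert (X*X+Y*Y-2 > 0)%Z by nia. nia. }
  
  destruct (Z_lt_le_dec D 1) as [H0|H1].
  - exfalso. assert (P*D <= 0)%Z by (apply Z.mul_nonneg_nonpos; lia). 
    assert (P*P >= 36)%Z by nia. 
    assert (D*D >= 0)%Z by (pose proof (Z.square_nonneg D); lia).
    assert (F : (3*P*P - 3*P*D + D*D - 1 > 0)%Z) by lia. 
    assert (D*(3*P*P - 3*P*D + D*D - 1) <= 0)%Z by (apply Z.mul_nonpos_nonneg; lia). lia.
  -  destruct (Z.eq_dec D 1) as [->|H2]; [left|right].
    { split; [lia|]. assert (HP0 : (P*(3*P - 3 - (X*X+Y*Y-2)) = 0)%Z) by lia.
      apply Z.mul_eq_0 in HP0. destruct HP0; [lia|]. subst P; lia. }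
    assert (HD : (D < P)%Z) by lia.
    assert (Fa : (3*P*P - 3*P*(D+2) + D*D+2*D+3 > 0)%Z).
    { remember (P - D)%Z as e. assert (D = P - e)%Z by lia. subst D.
      assert (P*(P+e-4) > 0)%Z by nia. nia. }
    
    assert (G : ((D-2)*(3*P*P - 3*P*(D+2) + D*D+2*D+3) >= 0)%Z) by nia.
    assert (G2 : (P*(X*X+Y*Y-2) >= 6*P*P - 12*P + 6)%Z) by nia.
    
    assert (G3 : (X*X+Y*Y-2 > 6*P - 12)%Z).
    { destruct (Z_le_gt_dec (X*X+Y*Y-2) (6*P - 12)); [|lia].
      assert (P*(X*X+Y*Y-2) <= P*(6*P-12))%Z by (apply Z.mul_le_mono_nonneg_l; lia). lia. }
    
    subst P.
    remember (Y - X)%Z as K. assert (Y = X + K)%Z by lia. subst Y.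
    assert (X*X >= 4)%Z by nia.
    assert (K >= 1)%Z by lia.
    clear - G3 H H0 HX.
    destruct (Z.eq_dec K 1) as [->|]; [lia|].
    assert (K*K >= 4)%Z by nia. lia.
Qed.

Lemma fibSS m : fib (S (S m)) = fib (S m) + fib m.
Proof. reflexivity. Qed.

Lemma fib3 m : fib (m + 4) + fib m = 3 * fib (m + 2).
Proof.
  replace (m+4) with (S (S (S (S m)))) by lia. replace (m+2) with (S (S m)) by lia.
  rewrite !fibSS. lia.
Qed.

Lemma cas_step m : (Z.of_nat (fib (m+1)) * Z.of_nat (fib (m+3)) - Z.of_nat (fib (m+2))^2
   = - (Z.of_nat (fib m) * Z.of_nat (fib (m+2)) - Z.of_nat (fib (m+1))^2))%Z.
Proof.
  replace (m+3) with (S (S (S m))) by lia. replace (m+2) with (S (S m)) by lia.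
  replace (m+1) with (S m) by lia.
  rewrite !fibSS, !Nat2Z.inj_add. ring.
Qed.

Definition Qf m := (Z.of_nat (fib m) * Z.of_nat (fib (m+2)) - Z.of_nat (fib (m+1))^2)%Z.

Lemma Qstep m : Qf (m+1) = (- Qf m)%Z.
Proof.
  unfold Qf. rewrite <- cas_step.
  replace (m+1+2) with (m+3) by lia. replace (m+1+1) with (m+2) by lia. reflexivity.
Qed.

Lemma cas n : (Z.of_nat (fib (2*n+1)) * Z.of_nat (fib (2*n+3)) = Z.of_nat (fib (2*n+2))^2 + 1)%Z.
Proof.
  enough (Qf (2*n+1) = 1%Z) as H.
  { unfold Qf in H. replace (2*n+1+2) with (2*n+3) in H by lia.
    replace (2*n+1+1) with (2*n+2) in H by lia. lia. }
  induction n.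
  - reflexivity.
  - replace (2 * S n + 1) with (2*n+1+1+1) by lia. rewrite Qstep, Qstep. lia.
Qed.

Lemma markov N : forall x y, x < N -> 0 < x -> x < y -> x*x+y*y+1 = 3*x*y ->
  exists n, 1 <= n /\ x = fib (2*n-1) /\ y = fib (2*n+1).
Proof.
  induction N as [|N IH]; intros x y HN Hx Hxy E; [lia|].
  destruct (Nat.eq_dec x 1) as [->|Hx1].
  - exists 1. assert (y = 2) by nia. subst. simpl. auto.
  - assert (Hy3 : y < 3*x) by nia.
    destruct (Nat.le_exists_sub y (3*x)) as [w [Hw _]]; [lia|].
    assert (E2 : w*y = x*x+1) by (subst; nia).
    assert (Hw0 : 0 < w) by (destruct w; nia).
    assert (Hwx : w < x) by nia.
    assert (E3 : w*w + x*x + 1 = 3*w*x) by (subst; nia).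
    destruct (IH w x ltac:(lia) Hw0 Hwx E3) as [n [Hn [Hwf Hxf]]].
    exists (S n). split; [lia|]. split.
    + replace (2 * S n - 1) with (2*n+1) by lia. exact Hxf.
    + pose proof (fib3 (2*n-1)) as F.
      replace (2*n-1+2) with (2*n+1) in F by lia.
      replace (2*n-1+4) with (2*S n+1) in F by lia. lia.
Qed.

Lemma real_bound (x k : nat) : (1 <= x)%nat -> (x*x + x*k <= k*k+1)%nat ->
  (1 <= INR x <= - (1/2) * INR k + (1/2) * sqrt (3 * INR k ^ 2 + 2 * INR k * sqrt (INR k ^ 2 + 4) + 4))%R.
Proof.
  intros H1 H2.
  apply le_INR in H1. apply le_INR in H2. rewrite !plus_INR, !mult_INR in H2. simpl in H1.
  set (xr := INR x) in *. set (kr := INR k) in *.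
  assert (Hk : (0 <= kr)%R) by apply pos_INR.
  assert (Hs : (kr <= sqrt (kr^2+4))%R).
  { rewrite <- (sqrt_pow2 kr Hk) at 1. apply sqrt_le_1_alt. lra. }
  assert (Hm : (2*xr + kr <= sqrt (3 * kr ^ 2 + 2 * kr * sqrt (kr ^ 2 + 4) + 4))%R).
  { rewrite <- (sqrt_pow2 (2*xr+kr)) by lra. apply sqrt_le_1_alt.
    assert (kr*kr <= kr * sqrt (kr^2+4))%R by (apply Rmult_le_compat_l; lra).
    simpl in *. lra. }
  split; lra.
Qed.

Theorem theorem6 (x y z : nat) :
  (0 < x)%nat -> (0 < y)%nat -> (0 < z)%nat -> (x < y)%nat ->
  ((Z.of_nat x - 1) * Z.of_nat x * (Z.of_nat x + 1) *
   ((Z.of_nat y - 1) * Z.of_nat y * (Z.of_nat y + 1))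
   = (Z.of_nat z - 1) * Z.of_nat z * (Z.of_nat z + 1))%Z ->
  let k := INR (y - x) in
  (exists n : nat, (1 <= n)%nat /\
     x = fib (2 * n - 1) /\ y = fib (2 * n + 1) /\ z = fib (2 * n) ^ 2)
  \/
  (1 <= INR x <= - (1/2) * k + (1/2) * sqrt (3 * k ^ 2 + 2 * k * sqrt (k ^ 2 + 4) + 4))%R.
Proof.
  intros Hx Hy Hz Hxy E k.
  destruct (Nat.eq_dec x 1) as [->|Hx1].
  { right. apply real_bound; nia. }
  destruct (core (Z.of_nat x) (Z.of_nat y) (Z.of_nat z) ltac:(lia) ltac:(lia) ltac:(lia) E)
    as [[D M]|B].
  - left. assert (M' : x*x+y*y+1 = 3*x*y) by lia.
    destruct (markov (S x) x y ltac:(lia) Hx Hxy M') as [n [Hn [Hxf Hyf]]].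
    exists n. split; [exact Hn|]. split; [exact Hxf|]. split; [exact Hyf|].
    pose proof (cas (n-1)) as C.
    replace (2*(n-1)+1) with (2*n-1) in C by lia.
    replace (2*(n-1)+3) with (2*n+1) in C by lia.
    replace (2*(n-1)+2) with (2*n) in C by lia.
    rewrite <- Hxf, <- Hyf in C. apply Nat2Z.inj. rewrite Nat2Z.inj_pow. simpl (Z.of_nat 2). lia.
  - right. apply real_bound; [lia|].
    remember (y - x) as kk. assert (y = x + kk) by lia. subst y.
    rewrite Nat2Z.inj_add in B. clear - B. lia.
Qed.
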